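(* Let $n\ge2$, $(a,b)\in\Omega_n$, and $L=L^{(n)}_{(a,b)}$. Then $H_L=\langle\omega^{2ab}\rangle$, the cyclic group $C_{n/ab}$ of order $n/(ab)$, so the base group for $L$ is $G=G_{\mathcal{D}_n}(L^{(n)}_{(a,b)},C_{n/ab})$, and $$|G|=\frac{8n^2}{ab},\qquad G \text{ has } \frac{2n}{ab}+\frac{2n}{a}+\frac{2n}{b}-2 \text{ reflections}.$$ Moreover, the base groups obtained for different $(a,b)\in\Omega_n$ are all different.
   Context: $\mathbb{H}$ is the real quaternion algebra with basis $1,i,j,k$. For $n\ge2$ let $\omega:=\cos(\pi/n)+i\sin(\pi/n)\in\mathbb{H}$ and $\mathcal{D}_n:=\langle\omega,j\rangle$ (dicyclic group of order $4n$); for $r\mid 2n$, $C_r:=\langle\omega^{2n/r}\rangle$. $\Omega_n:=\{(a,b):1\le a\le b\le n,\ a\mid n,\ b\mid n,\ \gcd(a,b)=1\}$. For $x,y$ in a group put $x\circ y:=xy^{-1}x$, and let $L(X)$ be the closure of a set $X$ under $\circ$; $L^{(n)}_{(a,b)}:=L(\{1,\omega^a,j,\omega^bj\})$ (a reflection system for $\mathcal{D}_n$, i.e. a subset generating $\mathcal{D}_n$, closed under $\circ$ and containing $1$). For $b\in\mathcal{D}_n$ let $M_b=\begin{pmatrix}0&b\\ b^{-1}&0\end{pmatrix}$. For a reflection system $L$, $H_L:=\{h:\mathrm{diag}(h,1)\in\langle M_b:b\in L\rangle\}$. For $H\trianglelefteq K$ with $H\subseteq L$, $LH=L$, $G(K,L,H)$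 is the subgroup of $U(\mathbb{H}^2)$ generated by $\mathrm{diag}(h,1),\mathrm{diag}(1,h)$ ($h\in H$) and $M_b$ ($b\in L$); it is in canonical form, denoted $G_K(L,H)$, if $\{b: M_b\in G(K,L,H)\}=L$. The base group for $L$ is $G_K(L,H_L)$. A reflection is a non-identity $g\in U(\mathbb{H}^2)$ with $\operatorname{rank}(g-I)=1$. *)

(* Defs.v *)
From HB Require Import structures.
From mathcomp Require Import all_boot all_order all_algebra.
From mathcomp Require Import boolp classical_sets reals trigo.
Set Implicit Arguments. Unset Strict Implicit. Unset Printing Implicit Defensive.
Import Order.TTheory GRing.Theory Num.Theory.
Local Open Scope classical_set_scope.
Local Open Scope ring_scope.

Record quat (R : realType) := Quat { q0 : R; q1 : R; q2 : R; q3 : R }.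

Definition quat_tuple (R : realType) (q : quat R) : R * R * R * R :=
  (q0 q, q1 q, q2 q, q3 q).
Definition tuple_quat (R : realType) (t : R * R * R * R) : quat R :=
  let: (a, b, c, d) := t in Quat a b c d.
Lemma quat_tupleK (R : realType) : cancel (@quat_tuple R) (@tuple_quat R).
Proof. by case. Qed.
HB.instance Definition _ (R : realType) :=
  Equality.copy (quat R) (can_type (@quat_tupleK R)).

Section Quaternions.
Variable R : realType.
Local Notation H := (quat R).

Definition qzero : H := Quat 0 0 0 0.
Definition qone : H := Quat 1 0 0 0.
Definition qI : H := Quat 0 1 0 0.
Definition qJ : H := Quat 0 0 1 0.
Definition qK : H := Quat 0 0 0 1.

Definition qadd (x y : H) : H :=
  Quat (q0 x + q0 y) (q1 x + q1 y) (q2 x + q2 y) (q3 x + q3 y).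
Definition qopp (x : H) : H := Quat (- q0 x) (- q1 x) (- q2 x) (- q3 x).

Definition qmul (x y : H) : H :=
  Quat (q0 x * q0 y - q1 x * q1 y - q2 x * q2 y - q3 x * q3 y)
       (q0 x * q1 y + q1 x * q0 y + q2 x * q3 y - q3 x * q2 y)
       (q0 x * q2 y - q1 x * q3 y + q2 x * q0 y + q3 x * q1 y)
       (q0 x * q3 y + q1 x * q2 y - q2 x * q1 y + q3 x * q0 y).

Definition qconj (x : H) : H := Quat (q0 x) (- q1 x) (- q2 x) (- q3 x).
Definition qnorm2 (x : H) : R := q0 x ^+ 2 + q1 x ^+ 2 + q2 x ^+ 2 + q3 x ^+ 2.
Definition qinv (x : H) : H :=
  let c := (qnorm2 x)^-1 in
  Quat (c * q0 x) (c * - q1 x) (c * - q2 x) (c * - q3 x).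

Definition qpow (x : H) (k : nat) : H := iter k (qmul x) qone.

Inductive qgen (S : set H) : set H :=
| qgen_one : qgen S qone
| qgen_base x : S x -> qgen S x
| qgen_mul x y : qgen S x -> qgen S y -> qgen S (qmul x y)
| qgen_inv x : qgen S x -> qgen S (qinv x).

Definition omega (n : nat) : H := Quat (cos (pi / n%:R)) (sin (pi / n%:R)) 0 0.

Definition Dic (n : nat) : set H := qgen [set omega n; qJ].

Definition Ccyc (n r : nat) : set H := qgen [set qpow (omega n) (2 * n %/ r)].

Definition qcirc (x y : H) : H := qmul (qmul x (qinv y)) x.
Inductive Lclos (X : set H) : set H :=
| Lclos_base x : X x -> Lclos X x
| Lclos_circ x y : Lclos X x -> Lclos X y -> Lclos X (qcirc x y).

Definition Lab (n a b : nat) : set H :=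
  Lclos [set qone; qpow (omega n) a; qJ; qmul (qpow (omega n) b) qJ].

Record mat2 := Mat2 { m11 : H; m12 : H; m21 : H; m22 : H }.

Definition mat2_tuple (A : mat2) := (m11 A, m12 A, m21 A, m22 A).
Definition tuple_mat2 (t : H * H * H * H) : mat2 :=
  let: (a, b, c, d) := t in Mat2 a b c d.
Lemma mat2_tupleK : cancel mat2_tuple tuple_mat2.
Proof. by case. Qed.

Definition mI : mat2 := Mat2 qone qzero qzero qone.
Definition mzero : mat2 := Mat2 qzero qzero qzero qzero.
Definition mmul (A B : mat2) : mat2 :=
  Mat2 (qadd (qmul (m11 A) (m11 B)) (qmul (m12 A) (m21 B)))
       (qadd (qmul (m11 A) (m12 B)) (qmul (m12 A) (m22 B)))
       (qadd (qmul (m21 A) (m11 B)) (qmul (m22 A) (m21 B)))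
       (qadd (qmul (m21 A) (m12 B)) (qmul (m22 A) (m22 B))).
Definition msub (A B : mat2) : mat2 :=
  Mat2 (qadd (m11 A) (qopp (m11 B))) (qadd (m12 A) (qopp (m12 B)))
       (qadd (m21 A) (qopp (m21 B))) (qadd (m22 A) (qopp (m22 B))).
Definition madj (A : mat2) : mat2 :=
  Mat2 (qconj (m11 A)) (qconj (m21 A)) (qconj (m12 A)) (qconj (m22 A)).

Definition unitary (A : mat2) : Prop := mmul (madj A) A = mI.

(* rank A = 1 over the division ring H: A <> 0 and A = u v^T
   (column u times row v), i.e. all rows are left multiples of one row. *)
Definition rank1 (A : mat2) : Prop :=
  A <> mzero /\
  exists u1 u2 v1 v2 : H,
    A = Mat2 (qmul u1 v1) (qmul u1 v2) (qmul u2 v1) (qmul u2 v2).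

Definition reflection (g : mat2) : Prop :=
  unitary g /\ g <> mI /\ rank1 (msub g mI).

(* subgroup of U(H^2) generated by a set S of unitary matrices
   (for unitary matrices the inverse is the conjugate transpose) *)
Inductive mgen (S : set mat2) : set mat2 :=
| mgen_one : mgen S mI
| mgen_base g : S g -> mgen S g
| mgen_mul g h : mgen S g -> mgen S h -> mgen S (mmul g h)
| mgen_inv g : mgen S g -> mgen S (madj g).

Definition diag2 (h k : H) : mat2 := Mat2 h qzero qzero k.
Definition Mb (b : H) : mat2 := Mat2 qzero b (qinv b) qzero.

Definition HL (L : set H) : set H :=
  [set h | mgen [set g | exists2 b, L b & g = Mb b] (diag2 h qone)].

(* G(K, L, H) (does not depend on K) *)
Definition Ggrp (L Hs : set H) : set mat2 :=
  mgen [set g | (exists2 h, Hs h & g = diag2 h qone \/ g = diag2 qone h)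
                \/ (exists2 b, L b & g = Mb b)].

Definition GK_conditions (K L Hs : set H) : Prop :=
  [/\ Hs `<=` K,
      (forall k h, K k -> Hs h -> Hs (qmul (qmul k h) (qinv k))),
      Hs `<=` L,
      [set z | exists x y, [/\ L x, Hs y & z = qmul x y]] = L &
      [set b | Ggrp L Hs (Mb b)] = L].

Definition base_group (L : set H) : set mat2 := Ggrp L (HL L).

End Quaternions.

HB.instance Definition _ (R : realType) :=
  Equality.copy (mat2 R) (can_type (@mat2_tupleK R)).

Definition has_card (T : eqType) (P : set T) (m : nat) : Prop :=
  exists s : seq T, [/\ uniq s, size s = m & forall x, P x <-> x \in s].

Definition Omega (n a b : nat) : bool :=
  [&& 1 <= a, a <= b, b <= n, a %| n, b %| n & coprime a b]%N.

(* Main.v *)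
Require Import Defs.
From HB Require Import structures.
From mathcomp Require Import all_boot all_order all_algebra.
From mathcomp Require Import boolp classical_sets reals trigo.
From mathcomp Require Import ring lra zify.
Set Implicit Arguments. Unset Strict Implicit. Unset Printing Implicit Defensive.
Import Order.TTheory GRing.Theory Num.Theory.
Local Open Scope classical_set_scope.
Local Open Scope ring_scope.

Section Q.
Variable R : realType.
Local Notation H := (quat R).
Local Notation qone := (@qone R).
Local Notation qzero := (@qzero R).
Local Notation qJ := (@qJ R).
Implicit Types x y z : H.

Lemma quatE x : x = Quat (q0 x) (q1 x) (q2 x) (q3 x).
Proof. by case: x. Qed.

Lemma qmulA x y z : qmul x (qmul y z) = qmul (qmul x y) z.
Proof. case: x => ????; case: y => ????; case: z => ????; rewrite /qmul /=; congr Quat; ring. Qed.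

Lemma qmul1 x : qmul qone x = x.
Proof. case: x => ????; rewrite /qmul /=; congr Quat; ring. Qed.
Lemma qmulr1 x : qmul x qone = x.
Proof. case: x => ????; rewrite /qmul /=; congr Quat; ring. Qed.
Lemma qmul0 x : qmul qzero x = qzero.
Proof. case: x => ????; rewrite /qmul /qzero /=; congr Quat; ring. Qed.
Lemma qmulr0 x : qmul x qzero = qzero.
Proof. case: x => ????; rewrite /qmul /qzero /=; congr Quat; ring. Qed.
Lemma qadd0 x : qadd qzero x = x.
Proof. case: x => ????; rewrite /qadd /qzero /=; congr Quat; ring. Qed.
Lemma qaddr0 x : qadd x qzero = x.
Proof. case: x => ????; rewrite /qadd /qzero /=; congr Quat; ring. Qed.
Lemma qconj0 : qconj qzero = qzero.
Proof. by rewrite /qconj /qzero /= oppr0. Qed.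

Lemma qnorm2_eq0 x : qnorm2 x = 0 -> x = qzero.
Proof.
case: x => a b c d; rewrite /qnorm2 /= => h.
have ha : a = 0 by nra. have hb : b = 0 by nra. have hc : c = 0 by nra. have hd : d = 0 by nra.
by rewrite ha hb hc hd.
Qed.

Lemma qinvK x : x <> qzero -> qmul (qinv x) x = qone /\ qmul x (qinv x) = qone.
Proof.
move=> nz; have N0 : qnorm2 x != 0 by apply/eqP => /qnorm2_eq0.
move: N0; case: x {nz} => a b c d; rewrite /qnorm2 /qinv /qmul /qone /= => N0.
set N := (a ^+ 2 + b ^+ 2 + c ^+ 2 + d ^+ 2) in N0 *.
have hN : N^-1 * N = 1 by rewrite mulVf.
split; congr Quat; rewrite -?hN /N; ring.
Qed.

End Q.

Section T.
Variable R : realType.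
Variable n : nat.
Hypothesis n0 : (0 < n)%N.
Local Notation H := (quat R).
Local Notation N := (n%:Z).

Definition ang (k : int) : R := k%:~R * pi / n%:R.
Definition C k := cos (ang k).
Definition S k := sin (ang k).

Lemma nR0 : (n%:R : R) != 0. Proof. by rewrite pnatr_eq0 -lt0n. Qed.

Lemma angD k l : ang (k + l) = ang k + ang l.
Proof. by rewrite /ang intrD !mulrDl. Qed.
Lemma angN k : ang (- k) = - ang k.
Proof. by rewrite /ang mulrNz !mulNr. Qed.
Lemma ang0 : ang 0 = 0. Proof. by rewrite /ang mul0r mul0r. Qed.
Lemma angn : ang N = pi.
Proof. by rewrite /ang pmulrn mulrAC mulfV ?nR0 // mul1r. Qed.

Lemma CD k l : C (k + l) = C k * C l - S k * S l. Proof. by rewrite /C /S angD cosD. Qed.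
Lemma SD k l : S (k + l) = S k * C l + C k * S l. Proof. by rewrite /C /S angD sinD. Qed.
Lemma CN k : C (- k) = C k. Proof. by rewrite /C angN cosN. Qed.
Lemma SN k : S (- k) = - S k. Proof. by rewrite /S angN sinN. Qed.
Lemma C0 : C 0 = 1. Proof. by rewrite /C ang0 cos0. Qed.
Lemma S0 : S 0 = 0. Proof. by rewrite /S ang0 sin0. Qed.
Lemma CDn k : C (k + N) = - C k. Proof. by rewrite /C angD angn cosDpi. Qed.
Lemma SDn k : S (k + N) = - S k. Proof. by rewrite /S angD angn sinDpi. Qed.
Lemma CS2 k : C k ^+ 2 + S k ^+ 2 = 1. Proof. exact: cos2Dsin2. Qed.

Lemma ang_ge0 k : 0 <= k -> 0 <= ang k.
Proof.
move=> hk; rewrite /ang divr_ge0 ?ler0n // mulr_ge0 ?pi_ge0 //.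
by rewrite ler0z.
Qed.
Lemma ang_gt0 k : 0 < k -> 0 < ang k.
Proof.
move=> hk; rewrite /ang divr_gt0 ?ltr0n // mulr_gt0 ?pi_gt0 //.
by rewrite ltr0z.
Qed.
Lemma ang_lepi k : k <= N -> ang k <= pi.
Proof.
move=> hk; rewrite /ang ler_pdivrMr ?ltr0n // mulrC ler_pM2l ?pi_gt0 //.
by rewrite -(ler_int R) in hk.
Qed.
Lemma ang_ltpi k : k < N -> ang k < pi.
Proof.
move=> hk; rewrite /ang ltr_pdivrMr ?ltr0n // mulrC ltr_pM2l ?pi_gt0 //.
by rewrite -(ltr_int R) in hk.
Qed.

Lemma C1_period k : 0 < k < 2 * N -> C k != 1.
Proof.
case/andP=> k0 k2.
have pi0 : (0 : R) \in `[0, pi] by rewrite in_itv /= lexx pi_ge0.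
have pipi : (pi : R) \in `[0, pi] by rewrite in_itv /= lexx pi_ge0.
case: (lerP k N) => hk.
  have hin : ang k \in `[0, pi].
    by rewrite in_itv /=; apply/andP; split; [apply: ang_ge0 | apply: ang_lepi]; lia.
  have := ltr_cos pi0 hin; rewrite ang_gt0 // cos0 => h.
  by rewrite /C lt_eqF.
have hk' : 0 < k - N < N by apply/andP; split; lia.
have hin : ang (k - N) \in `[0, pi].
  by rewrite in_itv /=; apply/andP; split; [apply: ang_ge0 | apply: ang_lepi]; lia.
have := ltr_cos hin pipi; rewrite ang_ltpi; last by lia.
move=> /esym h.
have -> : k = (k - N) + N by ring.
rewrite CDn /C; apply/eqP => e.
move: h; rewrite cospi; have -> : cos (ang (k - N)) = -1 by rewrite -e opprK.
by rewrite ltxx.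
Qed.


Definition E (k : int) (e : bool) : H :=
  if e then Quat 0 0 (C k) (S k) else Quat (C k) (S k) 0 0.

Definition ex (k : int) (e : bool) (l : int) (f : bool) : int :=
  (if e then k - l else k + l) + (if e && f then N else 0).

Lemma EM k e l f : qmul (E k e) (E l f) = E (ex k e l f) (e (+) f).
Proof.
case: e; case: f; rewrite /E /ex /qmul /= ?addr0 ?CDn ?SDn ?CD ?SD ?CN ?SN;
  congr Quat; ring.
Qed.

Lemma Enorm k e : qnorm2 (E k e) = 1.
Proof. by case: e; rewrite /qnorm2 /E /= -(CS2 k); ring. Qed.

Lemma EV k e : qinv (E k e) = E (if e then k + N else - k) e.
Proof.
rewrite /qinv Enorm invr1; case: e; rewrite /E /= ?CDn ?SDn ?CN ?SN; congr Quat; ring.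
Qed.

Lemma Econj k e : qconj (E k e) = qinv (E k e).
Proof. rewrite EV; case: e; rewrite /E /qconj /= ?CDn ?SDn ?CN ?SN; congr Quat; ring. Qed.

Lemma Eeq k l e : k = l -> E k e = E l e.
Proof. by move->. Qed.

Lemma E_2n k e : E (k + 2 * N) e = E k e.
Proof.
have -> : k + 2 * N = (k + N) + N by ring.
by rewrite /E !CDn !SDn !opprK.
Qed.

Lemma E_per k (m : int) e : E (k + m * (2 * N)) e = E k e.
Proof.
have hp : forall (j : nat) k, E (k + j%:Z * (2 * N)) e = E k e.
  elim=> [|j IH] k'; first by rewrite mul0r addr0.
  have -> : k' + (j.+1)%:Z * (2 * N) = (k' + j%:Z * (2 * N)) + 2 * N.
    by rewrite -addn1 PoszD mulrDl mul1r addrA.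
  by rewrite E_2n IH.
case: m => j; first exact: hp.
rewrite -(hp j.+1 (k + Negz j * (2 * N))); congr E.
by rewrite NegzE; ring.
Qed.

Lemma Eq1 : @qone R = E 0 false.
Proof. by rewrite /E C0 S0. Qed.
Lemma EqJ : @qJ R = E 0 true.
Proof. by rewrite /E C0 S0. Qed.
Lemma Eomega : @omega R n = E 1 false.
Proof. by rewrite /E /C /S /ang mul1r. Qed.
Lemma Eqpow (m : nat) : qpow (@omega R n) m = E m false.
Proof.
elim: m => [|m IH]; first by rewrite /= Eq1.
rewrite /qpow iterS -/(qpow _ m) IH Eomega EM.
by apply: Eeq; rewrite /ex /=; lia.
Qed.

Lemma E_neq0 k e : E k e <> @qzero R.
Proof.
move=> h; have := Enorm k e; rewrite h /qnorm2 /qzero /=.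
by move/eqP; rewrite expr0n /= !addr0 eq_sym oner_eq0.
Qed.

Lemma C1_dvd k : C k = 1 -> (2 * N %| k)%Z.
Proof.
move=> h; have N2 : 2 * N != 0 by rewrite mulf_eq0 /=; apply/eqP; lia.
have hk : C (k %% (2 * N))%Z = 1.
  by rewrite -h {2}(divz_eq k (2 * N)) addrC; have := E_per (k %% (2 * N))%Z (k %/ (2 * N))%Z false; rewrite /E => -[->].
have r0 := modz_ge0 k N2.
have r2 : (k %% (2 * N) < 2 * N)%Z by apply: ltz_pmod; lia.
case: (ltrP 0 (k %% (2 * N))%Z) => hr.
  by have := C1_period (k := (k %% (2 * N))%Z); rewrite hr r2 hk eqxx => /(_ isT).
by apply/dvdz_mod0P; apply/eqP; rewrite eq_le hr r0.
Qed.

Lemma E_inj k l e f : E k e = E l f -> e = f /\ (2 * N %| k - l)%Z.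
Proof.
have key : C k = C l -> S k = S l -> (2 * N %| k - l)%Z.
  move=> h1 h2; apply: C1_dvd; rewrite CD CN SN h1 h2 -(CS2 l); ring.
have bad : C k = 0 -> S k = 0 -> False.
  by move=> h1 h2; have := CS2 k; rewrite h1 h2 expr0n /= addr0 => /eqP; rewrite eq_sym oner_eq0.
move=> h; have h0 := congr1 (@q0 R) h; have h1 := congr1 (@q1 R) h.
have h2 := congr1 (@q2 R) h; have h3 := congr1 (@q3 R) h.
move: h0 h1 h2 h3; clear h; case: e; case: f; rewrite /E /= => h0 h1 h2 h3.
- by split => //; apply: key.
- by case: bad.
- by case: bad.
- by split => //; apply: key.
Qed.

End T.
Arguments E : simpl never.

Section Q2.
Variable R : realType.
Local Notation H := (quat R).
Local Notation qone := (@qone R).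
Local Notation qzero := (@qzero R).
Implicit Types p q x y : H.

Lemma qmulNl p q : qmul (qopp p) q = qopp (qmul p q).
Proof. case: p => ????; case: q => ????; rewrite /qmul /qopp /=; congr Quat; ring. Qed.
Lemma qmulNr p q : qmul p (qopp q) = qopp (qmul p q).
Proof. case: p => ????; case: q => ????; rewrite /qmul /qopp /=; congr Quat; ring. Qed.
Lemma qoppK p : qopp (qopp p) = p.
Proof. case: p => ????; by rewrite /qopp /= !opprK. Qed.
Lemma qone_neq0 : qone <> qzero.
Proof. by move=> [] /eqP; rewrite oner_eq0. Qed.

Lemma qmul_eq0 p q : qmul p q = qzero -> p = qzero \/ q = qzero.
Proof.
case: (pselect (p = qzero)) => [->|hp]; first by left.
move=> h; right; have [h1 _] := qinvK hp.
by rewrite -[q]qmul1 -h1 -qmulA h qmulr0.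
Qed.

Lemma qmul_comm1 p q : qmul p q = qone -> qmul q p = qone.
Proof.
move=> h; have hp : p <> qzero by move=> hp; apply: qone_neq0; rewrite -h hp qmul0.
have [h1 h2] := qinvK hp.
have -> : q = qinv p by rewrite -[q]qmul1 -h1 -qmulA h qmulr1.
exact: h1.
Qed.

Lemma qmul_commm1 p q : qmul p q = qopp qone -> qmul q p = qopp qone.
Proof.
move=> h; have : qmul (qopp p) q = qone by rewrite qmulNl h qoppK.
by move/qmul_comm1; rewrite qmulNr => <-; rewrite qoppK.
Qed.

Lemma qsub_eq0 x y : qadd x (qopp y) = qzero -> x = y.
Proof.
case: x => ????; case: y => ????; rewrite /qadd /qopp /qzero => -[] *.
congr Quat; apply/eqP; rewrite -subr_eq0; apply/eqP; done.
Qed.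

Lemma qaddN0 x : qadd x (qopp qzero) = x.
Proof. case: x => ????; rewrite /qadd /qopp /qzero /=; congr Quat; ring. Qed.
Lemma qsubqq x : qadd x (qopp x) = qzero.
Proof. case: x => ????; rewrite /qadd /qopp /qzero /=; congr Quat; ring. Qed.
Lemma qmulm1 x : qmul (qopp qone) x = qopp x.
Proof. by rewrite qmulNl qmul1. Qed.

End Q2.

Section M.
Variable R : realType.
Local Notation H := (quat R).
Local Notation M := (mat2 R).
Local Notation qone := (@qone R).
Local Notation qzero := (@qzero R).

Definition Dg (x y : H) : M := diag2 x y.
Definition Ad (x y : H) : M := Mat2 qzero x y qzero.
Definition MM (t : bool) (x y : H) : M := if t then Ad x y else Dg x y.

Lemma MMmul t1 x1 y1 t2 x2 y2 :
  mmul (MM t1 x1 y1) (MM t2 x2 y2) =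
  MM (t1 (+) t2) (qmul x1 (if t1 then y2 else x2)) (qmul y1 (if t1 then x2 else y2)).
Proof.
by case: t1; case: t2; rewrite /MM /Dg /Ad /diag2 /mmul /=;
  rewrite ?qmul0 ?qmulr0 ?qadd0 ?qaddr0.
Qed.

Lemma MMadj t x y :
  madj (MM t x y) = MM t (qconj (if t then y else x)) (qconj (if t then x else y)).
Proof. by case: t; rewrite /MM /Dg /Ad /diag2 /madj /= qconj0. Qed.

Lemma MMeq t x y x' y' : x = x' -> y = y' -> MM t x y = MM t x' y'.
Proof. by move=> -> ->. Qed.

Lemma MM_inj t x y t' x' y' : MM t x y = MM t' x' y' ->
  x <> qzero -> x' <> qzero -> [/\ t = t', x = x' & y = y'].
Proof.
case: t; case: t'; rewrite /MM /Ad /Dg /diag2 => h nx nx'; case: h => *; subst => //.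
all: by [ exfalso; auto ].
Qed.

Lemma mgen_ind (S P : set M) : S `<=` P -> P (@mI R) ->
  (forall g h, P g -> P h -> P (mmul g h)) -> (forall g, P g -> P (madj g)) ->
  mgen S `<=` P.
Proof. by move=> hS h1 hM hA g; elim=> //; auto. Qed.

Lemma mgen_mono (S S' : set M) : S `<=` S' -> mgen S `<=` mgen S'.
Proof.
move=> sub; apply: mgen_ind.
- by move=> g /sub; apply: mgen_base.
- exact: mgen_one.
- by move=> g h; apply: mgen_mul.
- by move=> g; apply: mgen_inv.
Qed.


Lemma msub_Ad x y : msub (Ad x y) (@mI R) = Mat2 (qopp qone) x y (qopp qone).
Proof. by rewrite /msub /Ad /mI /= !qadd0 !qaddN0. Qed.
Lemma msub_Dg x y : msub (Dg x y) (@mI R) =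
  Dg (qadd x (qopp qone)) (qadd y (qopp qone)).
Proof. by rewrite /msub /Dg /diag2 /mI /= !qaddN0. Qed.

Lemma refl_Ad_inv x y : rank1 (msub (Ad x y) (@mI R)) -> qmul y x = qone.
Proof.
rewrite msub_Ad => -[_ [u1 [u2 [v1 [v2 hE]]]]].
have h11 := congr1 (@m11 R) hE; have h12 := congr1 (@m12 R) hE.
have h21 := congr1 (@m21 R) hE; have h22 := congr1 (@m22 R) hE; simpl in *.
rewrite h12 h21 -qmulA (qmulA v1) (qmul_commm1 (esym h11)) qmulm1 qmulNr -h22 qoppK //.
Qed.

Lemma refl_Dg x y : Dg x y <> (@mI R) -> rank1 (msub (Dg x y) (@mI R)) ->
  (x <> qone /\ y = qone) \/ (x = qone /\ y <> qone).
Proof.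
move=> ne; rewrite msub_Dg => -[_ [u1 [u2 [v1 [v2 hE]]]]].
have h11 := congr1 (@m11 R) hE; have h12 := congr1 (@m12 R) hE.
have h21 := congr1 (@m21 R) hE; have h22 := congr1 (@m22 R) hE; simpl in *.
case: (pselect (x = qone)) => hx.
  by right; split => // hy; apply: ne; rewrite hx hy.
left; split => //.
have nz : qmul u1 v1 <> qzero by rewrite -h11 => /qsub_eq0.
have u10 : u1 <> qzero by move=> h; apply: nz; rewrite h qmul0.
have v10 : v1 <> qzero by move=> h; apply: nz; rewrite h qmulr0.
case: (qmul_eq0 (esym h12)) => // hv2.
by apply: qsub_eq0; rewrite h22 hv2 qmulr0.
Qed.

Lemma rank1_Ad c : c <> qzero -> rank1 (msub (Ad c (qinv c)) (@mI R)).
Proof.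
move=> nz; rewrite msub_Ad; split.
  by move=> /(congr1 (@m11 R)) /= /(congr1 (@q0 R)) /= /eqP; rewrite oppr_eq0 oner_eq0.
exists qone, (qopp (qinv c)), (qopp qone), c.
have [h1 h2] := qinvK nz.
by rewrite ?qmul1 ?qmulNl ?qmulNr ?qoppK ?qmulr1 ?h1.
Qed.

Lemma rank1_D1 h : h <> qone -> rank1 (msub (Dg h qone) (@mI R)).
Proof.
move=> nh; rewrite msub_Dg qsubqq; split.
  by move=> /(congr1 (@m11 R)) /= /qsub_eq0.
exists qone, qzero, (qadd h (qopp qone)), qzero.
by rewrite /Dg /diag2 ?qmul1 ?qmulr0 ?qmul0.
Qed.

Lemma rank1_D2 h : h <> qone -> rank1 (msub (Dg qone h) (@mI R)).
Proof.
move=> nh; rewrite msub_Dg qsubqq; split.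
  by move=> /(congr1 (@m22 R)) /= /qsub_eq0.
exists qzero, qone, qzero, (qadd h (qopp qone)).
by rewrite /Dg /diag2 ?qmul1 ?qmulr0 ?qmul0.
Qed.

End M.

Lemma has_card_fin (T : eqType) (I : finType) (f : I -> T) (P : set T) :
  injective f -> (forall x, P x <-> exists i, x = f i) -> has_card P #|I|.
Proof.
move=> finj hP; exists (map f (enum I)); split.
- by rewrite map_inj_uniq // enum_uniq.
- by rewrite size_map cardE.
- move=> x; rewrite hP; split.
  + by move=> [i ->]; apply: map_f; rewrite mem_enum.
  + by move/mapP => [i _ ->]; exists i.
Qed.

Lemma small0 (d k x : int) : 0 < d -> x = k * d -> - d < x < d -> x = 0.
Proof.
move=> d0 -> /andP[h1 h2].
case: (ltrgtP k 0) => hk; last by rewrite hk mul0r.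
- have : (k + 1) * d <= 0 by rewrite pmulr_lle0 //; lia.
  lia.
- have : 0 <= (k - 1) * d by rewrite pmulr_lge0 //; lia.
  lia.
Qed.

Lemma ord_of (K : nat) (r : int) : 0 <= r < K%:Z -> exists i : 'I_K, r = (i : nat)%:Z.
Proof.
move=> /andP[r0 rK]; have h : (`|r|%N < K)%N by rewrite -ltz_nat gez0_abs.
by exists (Ordinal h); rewrite /= gez0_abs.
Qed.

Section G.
Variable R : realType.
Variables n a b : nat.
Hypothesis n0 : (0 < n)%N.
Hypothesis a0 : (0 < a)%N.
Hypothesis b0 : (0 < b)%N.
Hypothesis an : (a %| n)%N.
Hypothesis bn : (b %| n)%N.
Hypothesis cab : coprime a b.
Local Notation H := (quat R).
Local Notation M := (mat2 R).
Local Notation qone := (@qone R).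
Local Notation qzero := (@qzero R).
Local Notation N := (n%:Z).
Local Notation A := (a%:Z).
Local Notation B := (b%:Z).
Local Notation E := (@E R n).
Local Notation ex := (@ex n).

Definition eN (e : bool) : int := if e then N else 0.
Definition cond (e : bool) (u v : int) : bool :=
  (2 * B %| u + v - eN e)%Z && (2 * A %| u - v - eN e)%Z.
Definition Gp : set M := fun g =>
  exists t e u v, g = MM t (E u e) (E v e) /\ cond e u v.

Definition ia : int := (n %/ a)%N.
Definition ib : int := (n %/ b)%N.
Lemma Nia : N = ia * A.
Proof. by rewrite /ia -PoszM divnK. Qed.
Lemma Nib : N = ib * B.
Proof. by rewrite /ib -PoszM divnK. Qed.

Lemma Gp_mul g h : Gp g -> Gp h -> Gp (mmul g h).
Proof.
move=> [t1 [e1 [u1 [v1 [-> /andP[/dvdzP[y1 hy1] /dvdzP[x1 hx1]]]]]]].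
move=> [t2 [e2 [u2 [v2 [-> /andP[/dvdzP[y2 hy2] /dvdzP[x2 hx2]]]]]]].
have hA := Nia; have hB := Nib.
rewrite /Gp MMmul; case: t1 => /=.
- rewrite !EM //; do 4 eexists; split; first reflexivity.
  apply/andP; split; apply/dvdzP.
  + exists (y1 + (if e1 then -1 else 1) * y2 + (if e1 && e2 then ib else 0)).
    move: hy1 hy2 hx1 hx2; rewrite /ex /eN; case: e1; case: e2 => /= hy1 hy2 hx1 hx2; lia.
  + exists (x1 + (if e1 then -1 else 1) * (- x2 - (if e2 then ia else 0))).
    move: hy1 hy2 hx1 hx2; rewrite /ex /eN; case: e1; case: e2 => /= hy1 hy2 hx1 hx2; lia.
- rewrite !EM //; do 4 eexists; split; first reflexivity.
  apply/andP; split; apply/dvdzP.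
  + exists (y1 + (if e1 then -1 else 1) * y2 + (if e1 && e2 then ib else 0)).
    move: hy1 hy2 hx1 hx2; rewrite /ex /eN; case: e1; case: e2 => /= hy1 hy2 hx1 hx2; lia.
  + exists (x1 + (if e1 then -1 else 1) * x2).
    move: hy1 hy2 hx1 hx2; rewrite /ex /eN; case: e1; case: e2 => /= hy1 hy2 hx1 hx2; lia.
Qed.

Lemma Gp_adj g : Gp g -> Gp (madj g).
Proof.
move=> [t [e [u [v [-> /andP[/dvdzP[y hy] /dvdzP[x hx]]]]]]].
have hA := Nia; have hB := Nib.
rewrite /Gp MMadj; case: t => /=; rewrite !Econj // !EV //.
- exists true, e, (if e then v + N else - v), (if e then u + N else - u); split=> //.
  apply/andP; split; apply/dvdzP.
  + exists (if e then y + ib else - y).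
    move: hy hx; rewrite /eN; case: e => /= hy hx; lia.
  + exists (if e then - x - ia else x).
    move: hy hx; rewrite /eN; case: e => /= hy hx; lia.
- exists false, e, (if e then u + N else - u), (if e then v + N else - v); split=> //.
  apply/andP; split; apply/dvdzP.
  + exists (if e then y + ib else - y).
    move: hy hx; rewrite /eN; case: e => /= hy hx; lia.
  + exists (if e then x else - x).
    move: hy hx; rewrite /eN; case: e => /= hy hx; lia.
Qed.

Lemma Gp_one : Gp (@mI R).
Proof.
exists false, false, 0, 0; split; first by rewrite /MM /Dg /diag2 -(Eq1 R n).
by rewrite /cond /eN /= !dvdz0.
Qed.


Definition Lp : set H := fun c =>
  exists k e, c = E k e /\ (if e then (B %| k)%Z else (A %| k)%Z).

Lemma EbJ (m : nat) : qmul (qpow (omega R n) m) (qJ R) = E m true.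
Proof. by rewrite Eqpow // (EqJ R n) EM //; apply: Eeq; rewrite /ex /=; lia. Qed.

Lemma Lab_sub : @Lab R n a b `<=` Lp.
Proof.
move=> c; elim=> {c}.
- move=> x [[[->|->]|->]|->].
  + by exists 0, false; rewrite -(Eq1 R n) dvdz0.
  + by exists a, false; rewrite Eqpow // dvdzz.
  + by exists 0, true; rewrite -(EqJ R n) dvdz0.
  + by exists b, true; rewrite EbJ dvdzz.
- move=> x y _ [k [e [-> hk]]] _ [l [f [-> hl]]].
  rewrite /qcirc EV // !EM //.
  have hA := Nia; have hB := Nib.
  move: hk hl; case: e; case: f => /= /dvdzP[zk hk] /dvdzP[zl hl].
  + eexists; exists true; split; first reflexivity.
    by apply/dvdzP; exists (2 * zk - zl); rewrite /ex /=; lia.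
  + eexists; exists false; split; first reflexivity.
    by apply/dvdzP; exists (zl + ia); rewrite /ex /=; lia.
  + eexists; exists true; split; first reflexivity.
    by apply/dvdzP; exists (zl + ib); rewrite /ex /=; lia.
  + eexists; exists false; split; first reflexivity.
    by apply/dvdzP; exists (2 * zk - zl); rewrite /ex /=; lia.
Qed.

Lemma circ_E x y e : qcirc (E x e) (E y e) = E (2 * x - y) e.
Proof.
rewrite /qcirc EV // !EM //; case: e; apply: Eeq; rewrite /ex /=; lia.
Qed.

Lemma Lclos_lin (X : set H) (c : int) e :
  Lclos X (E 0 e) -> Lclos X (E c e) -> forall z : int, Lclos X (E (z * c) e).
Proof.
move=> h0 h1.
have P : forall m : nat, Lclos X (E (m%:Z * c) e) /\ Lclos X (E ((m%:Z + 1) * c) e).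
  elim=> [|m [IH1 IH2]]; first by rewrite mul0r add0r mul1r.
  split; first by rewrite -addn1 PoszD.
  have := Lclos_circ IH2 IH1; rewrite circ_E.
  by have -> : 2 * ((m%:Z + 1) * c) - m%:Z * c = ((m.+1)%:Z + 1) * c by rewrite intS; ring.
have Q : forall m : nat, Lclos X (E (- m%:Z * c) e) /\ Lclos X (E ((- m%:Z + 1) * c) e).
  elim=> [|m [IH1 IH2]]; first by rewrite oppr0 mul0r add0r mul1r.
  split; last by have -> : (- (m.+1)%:Z + 1) * c = - m%:Z * c by rewrite intS; ring.
  have := Lclos_circ IH1 IH2; rewrite circ_E.
  by have -> : 2 * (- m%:Z * c) - (- m%:Z + 1) * c = - (m.+1)%:Z * c by rewrite intS; ring.
case=> m; first exact: (P m).1.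
by rewrite NegzE; exact: (Q m.+1).1.
Qed.

Lemma Lp_sub : Lp `<=` @Lab R n a b.
Proof.
move=> c [k [e [-> hk]]].
case: e hk => /dvdzP[z ->].
- apply: Lclos_lin; apply: Lclos_base.
  + by rewrite -(EqJ R n) /setU /set1 /=; tauto.
  + by rewrite -EbJ /setU /set1 /=; tauto.
- apply: Lclos_lin; apply: Lclos_base.
  + by rewrite -(Eq1 R n) /setU /set1 /=; tauto.
  + by rewrite -Eqpow // /setU /set1 /=; tauto.
Qed.



Definition Sgen : set M := [set g | exists2 c, @Lab R n a b c & g = Mb c].

Lemma Gp_Mb c : Lp c -> Gp (Mb c).
Proof.
move=> [k [e [-> hk]]]; have hA := Nia; have hB := Nib.
exists true, e, k, (if e then k + N else - k); split; first by rewrite /Mb EV.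
move: hk; rewrite /cond /eN; case: e => /dvdzP[z hz]; apply/andP; split; apply/dvdzP.
- by exists z; lia.
- by exists (- ia); lia.
- by exists 0; lia.
- by exists z; lia.
Qed.

Lemma Gp_diag k : (2 * A * B %| k)%Z ->
  Gp (diag2 (E k false) qone) /\ Gp (diag2 qone (E k false)).
Proof.
move=> /dvdzP[z hz]; split.
- exists false, false, k, 0; split; first by rewrite -(Eq1 R n).
  by apply/andP; split; apply/dvdzP; [exists (z * A) | exists (z * B)]; rewrite /eN; lia.
- exists false, false, 0, k; split; first by rewrite -(Eq1 R n).
  by apply/andP; split; apply/dvdzP; [exists (z * A) | exists (- (z * B))]; rewrite /eN; lia.
Qed.

Lemma mgenSgen_Gp : mgen Sgen `<=` Gp.
Proof.
apply: mgen_ind.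
- by move=> g [c /Lab_sub hc ->]; apply: Gp_Mb.
- exact: Gp_one.
- by move=> g h; apply: Gp_mul.
- by move=> g; apply: Gp_adj.
Qed.

Lemma Sgen_Mb c : Lp c -> mgen Sgen (Mb c).
Proof. by move=> hc; apply: mgen_base; exists c => //; apply: Lp_sub. Qed.

Lemma Gp_mgen_dg e u v : cond e u v -> mgen Sgen (MM false (E u e) (E v e)).
Proof.
move=> /andP[/dvdzP[y hy] /dvdzP[x hx]].
have hA := Nia; have hB := Nib.
have LA : forall z : int, Lp (E (z * A) false).
  by move=> z; exists (z * A), false; split => //; apply: dvdz_mull; apply: dvdzz.
have LB : forall z : int, Lp (E (z * B) true).
  by move=> z; exists (z * B), true; split => //; apply: dvdz_mull; apply: dvdzz.
have L0 : Lp (E 0 false) by have := LA 0; rewrite mul0r.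
have L0' : Lp (E 0 true) by have := LB 0; rewrite mul0r.
have X : mgen Sgen (MM false (E (x * A) false) (E (- (x * A)) false)).
  have -> : MM false (E (x * A) false) (E (- (x * A)) false) =
            mmul (Mb (E (x * A) false)) (Mb (E 0 false)).
    rewrite /Mb !EV //; change (Mat2 qzero ?p ?q qzero) with (MM true p q).
    by rewrite MMmul !EM //; apply: MMeq; apply: Eeq; rewrite /ex /=; lia.
  by apply: mgen_mul; apply: Sgen_Mb.
have Y : mgen Sgen (MM false (E (y * B) false) (E (y * B) false)).
  have -> : MM false (E (y * B) false) (E (y * B) false) =
            mmul (Mb (E (y * B) true)) (Mb (E 0 true)).
    rewrite /Mb !EV //; change (Mat2 qzero ?p ?q qzero) with (MM true p q).
    rewrite MMmul !EM //; apply: MMeq.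
      by apply: Eeq; rewrite /ex /=; lia.
    by rewrite -(@E_2n R n n0 (y * B) false); apply: Eeq; rewrite /ex /=; lia.
  by apply: mgen_mul; apply: Sgen_Mb.
have Z : mgen Sgen (MM false (E N true) (E 0 true)).
  have -> : MM false (E N true) (E 0 true) = mmul (Mb (E 0 false)) (Mb (E 0 true)).
    rewrite /Mb !EV //; change (Mat2 qzero ?p ?q qzero) with (MM true p q).
    by rewrite MMmul !EM //; apply: MMeq; apply: Eeq; rewrite /ex /=; lia.
  by apply: mgen_mul; apply: Sgen_Mb.
have XY : mgen Sgen (MM false (E (x * A + y * B) false) (E (y * B - x * A) false)).
  have -> : MM false (E (x * A + y * B) false) (E (y * B - x * A) false) =
    mmul (MM false (E (x * A) false) (E (- (x * A)) false))
         (MM false (E (y * B) false) (E (y * B) false)).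
    by rewrite MMmul !EM //; apply: MMeq; apply: Eeq; rewrite /ex /=; lia.
  exact: mgen_mul.
move: hy hx; rewrite /eN; case: e => hy hx.
- have -> : MM false (E u true) (E v true) =
    mmul (MM false (E (x * A + y * B) false) (E (y * B - x * A) false))
         (MM false (E N true) (E 0 true)).
    by rewrite MMmul !EM //; apply: MMeq; apply: Eeq; rewrite /ex /=; lia.
  exact: mgen_mul.
- suff -> : MM false (E u false) (E v false) =
    MM false (E (x * A + y * B) false) (E (y * B - x * A) false) by [].
  by apply: MMeq; apply: Eeq; lia.
Qed.

Lemma cond_swap e u v : cond e u v -> cond e v u.
Proof.
move=> /andP[/dvdzP[y hy] /dvdzP[x hx]]; have hA := Nia.
apply/andP; split; apply/dvdzP.
- by exists y; lia.
- by exists (- x - (if e then ia else 0)); move: hy hx; rewrite /eN; case: e => hy hx; lia.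
Qed.

Lemma Gp_mgen : Gp `<=` mgen Sgen.
Proof.
move=> g [t [e [u [v [-> hc]]]]]; case: t; last exact: Gp_mgen_dg.
have -> : MM true (E u e) (E v e) = mmul (Mb (E 0 false)) (MM false (E v e) (E u e)).
  rewrite /Mb EV //; change (Mat2 qzero ?p ?q qzero) with (MM true p q).
  rewrite MMmul !EM //; apply: MMeq; apply: Eeq; rewrite /ex /=; case: e {hc}; lia.
apply: mgen_mul; first by apply: Sgen_Mb; exists 0, false; split => //; apply: dvdz0.
by apply: Gp_mgen_dg; apply: cond_swap.
Qed.


Lemma Gp_dg x y : Gp (diag2 x y) -> exists e u v, [/\ x = E u e, y = E v e & cond e u v].
Proof.
move=> [t [e [u [v [h hc]]]]]; case: t h => h.
- by exfalso; move: h => -[_ /esym /E_neq0].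
- by move: h => -[-> ->]; exists e, u, v.
Qed.

Lemma Gp_ad x y : Gp (Mat2 qzero x y qzero) ->
  exists e u v, [/\ x = E u e, y = E v e & cond e u v].
Proof.
move=> [t [e [u [v [h hc]]]]]; case: t h => h.
- by move: h => -[-> ->]; exists e, u, v.
- by exfalso; move: h => -[/esym /E_neq0].
Qed.

Lemma cBA : coprimez B A.
Proof. by rewrite /coprimez /gcdz /= gcdnC; exact: cab. Qed.

Lemma cond_core u v : cond false u v -> (2 * N %| v)%Z -> (2 * A * B %| u)%Z.
Proof.
move=> /andP[/dvdzP[y hy] /dvdzP[x hx]] /dvdzP[w hw].
have hA := Nia; have hB := Nib; rewrite /eN in hy hx.
have hu : u = (x + w * ia) * (2 * A) by move: hw; rewrite hA => hw; lia.
have hu' : u = (y - w * ib) * (2 * B) by move: hw; rewrite hB => hw; lia.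
have : (B %| (x + w * ia) * A)%Z.
  by apply/dvdzP; exists (y - w * ib); apply: (@mulIf _ 2); [by [] | lia].
rewrite Gauss_dvdzl ?cBA // => /dvdzP[z hz].
by apply/dvdzP; exists z; rewrite hu hz; ring.
Qed.

Definition Hset : set H := fun h => exists k, h = E k false /\ (2 * A * B %| k)%Z.

Lemma Gp_diag1 h : Gp (diag2 h qone) <-> Hset h.
Proof.
split.
- move/Gp_dg => [e [u [v [-> h1 hc]]]].
  have [he hv] := E_inj n0 (etrans (esym (Eq1 R n)) h1); subst e.
  exists u; split => //; apply: (cond_core hc).
  by move: hv; rewrite sub0r rpredN.
- by move=> [k [-> hk]]; case: (Gp_diag hk).
Qed.

Lemma Gp_diag2 h : Gp (diag2 qone h) <-> Hset h.
Proof.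
split.
- move/Gp_dg => [e [u [v [h1 -> hc]]]].
  have [he hv] := E_inj n0 (etrans (esym (Eq1 R n)) h1); subst e.
  exists v; split => //; apply: (cond_core (cond_swap hc)).
  by move: hv; rewrite sub0r rpredN.
- by move=> [k [-> hk]]; case: (Gp_diag hk).
Qed.

Lemma HL_eq : HL (@Lab R n a b) = Hset.
Proof.
apply/funext => h; apply/propext; rewrite -Gp_diag1; split.
- exact: mgenSgen_Gp.
- exact: Gp_mgen.
Qed.

Lemma Ggrp_eq : Ggrp (@Lab R n a b) Hset = Gp.
Proof.
apply/funext => g; apply/propext; split.
- move: g; apply: mgen_ind.
  + move=> g [[h hh [->|->]]|[c /Lab_sub hc ->]].
    * by apply/Gp_diag1.
    * by apply/Gp_diag2.
    * exact: Gp_Mb.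
  + exact: Gp_one.
  + by move=> g h; apply: Gp_mul.
  + by move=> g; apply: Gp_adj.
- move/Gp_mgen; apply: mgen_mono => g0 hg; by right.
Qed.

Lemma base_eq : base_group (@Lab R n a b) = Gp.
Proof. by rewrite /base_group HL_eq Ggrp_eq. Qed.


Lemma qgen_pow (X : set H) (m : int) : X (E m false) ->
  forall z : int, qgen X (E (z * m) false).
Proof.
move=> hm.
have P : forall j : nat, qgen X (E (j%:Z * m) false).
  elim=> [|j IH]; first by rewrite mul0r -(Eq1 R n); apply: qgen_one.
  have := qgen_mul (qgen_base hm) IH; rewrite EM //.
  by congr qgen; apply: Eeq; rewrite /ex /= intS; ring.
case=> j; first exact: P.
have := qgen_inv (P j.+1); rewrite EV //.
by congr qgen; apply: Eeq; rewrite NegzE; ring.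
Qed.

Lemma qgen_E (m : int) :
  qgen [set E m false] = [set h | exists k, h = E k false /\ (m %| k)%Z].
Proof.
apply/funext => h; apply/propext; split.
- elim=> {h}.
  + by exists 0; rewrite -(Eq1 R n) dvdz0.
  + by move=> x ->; exists m; rewrite dvdzz.
  + move=> x y _ [k [-> hk]] _ [l [-> hl]]; rewrite EM //.
    by exists (ex k false l false); split => //; rewrite /ex /= addr0 rpredD.
  + move=> x _ [k [-> hk]]; rewrite EV //.
    by exists (- k); rewrite rpredN.
- move=> [k [-> /dvdzP[z ->]]]; exact: qgen_pow.
Qed.

Lemma ab_n : (a * b %| n)%N.
Proof. by rewrite Gauss_dvd // an bn. Qed.

Definition cc : nat := (n %/ (a * b))%N.
Lemma n_cc : n = (cc * (a * b))%N.
Proof. by rewrite /cc divnK // ab_n. Qed.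
Lemma cc0 : (0 < cc)%N.
Proof. by move: n0; rewrite n_cc muln_gt0 => /andP[]. Qed.

Lemma Hset_qgen : Hset = qgen [set qpow (@omega R n) (2 * (a * b))].
Proof.
rewrite Eqpow // qgen_E /Hset; apply/funext => h; apply/propext.
by rewrite !PoszM mulrA.
Qed.

Lemma Ccyc_eq : @Ccyc R n (n %/ (a * b)) = Hset.
Proof.
rewrite Hset_qgen /Ccyc -/cc; congr (qgen [set qpow _ _]).
by rewrite {1}n_cc mulnA [(2 * cc)%N]mulnC -mulnA mulKn // cc0.
Qed.


Lemma Dic_sub : @Dic R n `<=` [set x | exists k e, x = E k e].
Proof.
move=> x; elim=> {x}.
- by exists 0, false; rewrite -(Eq1 R n).
- by move=> x [->|->]; [exists 1, false; rewrite Eomega | exists 0, true; rewrite (EqJ R n)].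
- by move=> x y _ [k [e ->]] _ [l [f ->]]; rewrite EM //; do 2 eexists.
- by move=> x _ [k [e ->]]; rewrite EV //; do 2 eexists.
Qed.

Lemma Hset_Dic : Hset `<=` @Dic R n.
Proof.
move=> h [k [-> _]]; rewrite -[k]mulr1; apply: qgen_pow.
by rewrite -Eomega; left.
Qed.

Lemma Hset_L : Hset `<=` @Lab R n a b.
Proof.
move=> h [k [-> hk]]; apply: Lp_sub; exists k, false; split => //.
by apply: dvdz_trans hk; apply/dvdzP; exists (2 * B); ring.
Qed.

Lemma GK : GK_conditions (@Dic R n) (@Lab R n a b) Hset.
Proof.
have hA := Nia; have hB := Nib.
split.
- exact: Hset_Dic.
- move=> x h /Dic_sub [k [e ->]] [l [-> /dvdzP[z hz]]].
  rewrite !EV // !EM // addbF addbb; eexists; split; first reflexivity.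
  apply/dvdzP; exists (if e then - z else z).
  by move: hz; case: e => /= hz; rewrite /ex /=; lia.
- exact: Hset_L.
- apply/funext => z; apply/propext; split.
  + move=> [x [y [/Lab_sub [k [e [-> hk]]] [l [-> hl]] ->]]].
    rewrite EM // addbF; apply: Lp_sub; eexists; exists e; split; first reflexivity.
    move: hk hl; case: e => /dvdzP[w hw] /dvdzP[w' hw']; apply/dvdzP.
    * by exists (w - w' * 2 * A); rewrite /ex /=; lia.
    * by exists (w + w' * 2 * B); rewrite /ex /=; lia.
  + move=> hz; exists z, qone; split => //.
    * by exists 0; rewrite -(Eq1 R n) dvdz0.
    * by rewrite qmulr1.
- rewrite Ggrp_eq; apply/funext => c; apply/propext; split.
  + move/Gp_ad => [e [u [v [-> hv hc]]]]; apply: Lp_sub; exists u, e; split => //.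
    move: hv; rewrite EV // => /(E_inj n0) [_ /dvdzP[w hw]].
    move: hc => /andP[/dvdzP[y hy] /dvdzP[x hx]]; move: hw hy hx; rewrite /eN.
    case: e => hw hy hx; apply/dvdzP.
    * by exists (y + w * ib); move: hw; rewrite hB => hw; lia.
    * by exists (x - w * ia); move: hw; rewrite hA => hw; lia.
  + by move=> /Lab_sub; apply: Gp_Mb.
Qed.


Definition a2 : nat := (2 * (n %/ a))%N.
Definition b1 : nat := (n %/ b)%N.
Definition fG (p : bool * bool * 'I_a2 * 'I_b1) : M :=
  let: (t, e, x, y) := p in
  MM t (E (x%:Z * A + y%:Z * B + eN e) e) (E (y%:Z * B - x%:Z * A) e).

Lemma fG_inj : injective fG.
Proof.
have hA := Nia; have hB := Nib.
move=> [[[t1 e1] x1] y1] [[[t2 e2] x2] y2] /= /MM_inj [] //; try exact: E_neq0.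
move=> -> /(E_inj n0) [he /dvdzP[m1 hm1]] /(E_inj n0) [_ /dvdzP[m2 hm2]].
subst e2.
have lx1 := ltn_ord x1; have lx2 := ltn_ord x2; have ly1 := ltn_ord y1; have ly2 := ltn_ord y2.
have bx : forall x : 'I_a2, x%:Z < 2 * ia.
  by move=> x; rewrite /ia -[2]/(2%N : int) -PoszM ltz_nat; exact: ltn_ord.
have by_ : forall y : 'I_b1, y%:Z < ib.
  by move=> y; rewrite /ib ltz_nat; exact: ltn_ord.
have lx1' := bx x1; have lx2' := bx x2; have ly1' := by_ y1; have ly2' := by_ y2.
clear lx1 lx2 ly1 ly2.
have B0 : B != 0 by rewrite eqz_nat -lt0n.
have A0 : A != 0 by rewrite eqz_nat -lt0n.
have hy : y1%:Z - y2%:Z = (m1 + m2) * ib.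
  apply/eqP; rewrite -subr_eq0; apply/eqP; apply: (@mulIf _ (2 * B)).
    by rewrite mulf_eq0 negb_or B0.
  rewrite mul0r; move: hm1 hm2; rewrite /eN hB; case: e1 => hm1 hm2; nia.
have hy0 : y1%:Z - y2%:Z = 0.
  apply: (small0 _ hy); [lia | apply/andP; split; lia].
have hx : x1%:Z - x2%:Z = m1 * (2 * ia).
  apply/eqP; rewrite -subr_eq0; apply/eqP; apply: (@mulIf _ A) => //.
  rewrite mul0r; move: hm1 hm2; rewrite /eN hA; case: e1 => hm1 hm2; nia.
have hx0 : x1%:Z - x2%:Z = 0.
  apply: (small0 _ hx); [lia | apply/andP; split; lia].
have ex1 : x1 = x2 by apply: ord_inj; lia.
have ey1 : y1 = y2 by apply: ord_inj; lia.
by rewrite ex1 ey1.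
Qed.

Lemma card_Gp : has_card Gp (8 * n ^ 2 %/ (a * b))%N.
Proof.
have -> : (8 * n ^ 2 %/ (a * b))%N = #|{: bool * bool * 'I_a2 * 'I_b1}|.
  rewrite !card_prod !card_ord card_bool /a2 /b1.
  have ha : n = (n %/ a * a)%N by rewrite divnK.
  have hb : n = (n %/ b * b)%N by rewrite divnK.
  move: ha hb; set a' := (n %/ a)%N; set b' := (n %/ b)%N; clearbody a' b' => ha hb.
  have -> : (8 * n ^ 2)%N = (8 * a' * b' * (a * b))%N.
    by rewrite expnS expn1 {1}ha hb; ring.
  by rewrite mulnK ?muln_gt0 ?a0 ?b0 //; ring.
apply: has_card_fin; first exact: fG_inj.
move=> g; split; last first.
  move=> [[[[t e] x] y] ->]; exists t, e; do 2 eexists; split; first reflexivity.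
  apply/andP; split; apply/dvdzP; [exists y%:Z | exists x%:Z]; rewrite /eN; case: e; lia.
move=> [t [e [u [v [-> /andP[/dvdzP[y0 hy0] /dvdzP[x0 hx0]]]]]]].
have hA := Nia; have hB := Nib.
have ia0 : 0 < ia by rewrite /ia ltz_nat divn_gt0 // dvdn_leq.
have ib0 : 0 < ib by rewrite /ib ltz_nat divn_gt0 // dvdn_leq.
set k := (y0 %/ ib)%Z; set y := (y0 %% ib)%Z.
have ey0 : y0 = k * ib + y by rewrite /k /y -divz_eq.
have y_ge0 : 0 <= y by rewrite /y modz_ge0 // gt_eqF.
have y_lt : y < ib by rewrite /y ltz_pmod.
set x' := x0 + ia * k.
set m := (x' %/ (2 * ia))%Z; set x := (x' %% (2 * ia))%Z.
have ex' : x' = m * (2 * ia) + x by rewrite /m /x -divz_eq.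
have x_ge0 : 0 <= x by rewrite /x modz_ge0 // gt_eqF // mulr_gt0.
have x_lt : x < 2 * ia by rewrite /x ltz_pmod // mulr_gt0.
have xo : (`|x|%N < a2)%N by rewrite /a2 -ltz_nat gez0_abs // PoszM.
have yo : (`|y|%N < b1)%N by rewrite /b1 -ltz_nat gez0_abs.
exists (t, e, Ordinal xo, Ordinal yo) => /=.
rewrite !gez0_abs //.
have hx0' : x0 = m * (2 * ia) + x - ia * k by rewrite -ex' /x'; ring.
have s1 : u = x0 * A + y0 * B + eN e by lia.
have s2 : v = y0 * B - x0 * A by lia.
have hu : u = (x * A + y * B + eN e) + m * (2 * N).
  have : u = x * A + y * B + eN e + m * (2 * (ia * A)) - k * (ia * A) + k * (ib * B).
    by rewrite s1 hx0' ey0; ring.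
  rewrite -hA -hB; lia.
have hv : v = (y * B - x * A) + (k - m) * (2 * N).
  have : v = y * B - x * A + k * (ib * B) - m * (2 * (ia * A)) + k * (ia * A).
    by rewrite s2 hx0' ey0; ring.
  rewrite -hA -hB; lia.
by rewrite hu hv !E_per.
Qed.


Lemma Gp_unitary g : Gp g -> unitary g.
Proof.
move=> [t [e [u [v [-> _]]]]].
have hu := (qinvK (@E_neq0 R n u e)).1; have hv := (qinvK (@E_neq0 R n v e)).1.
case: t; rewrite /unitary /madj /mmul /MM /Ad /Dg /diag2 /mI /= ?Econj //;
  by rewrite ?qconj0 ?qmul0 ?qmulr0 ?qadd0 ?qaddr0 ?hu ?hv.
Qed.

Lemma Gp_Mb_L c : Gp (Mb c) -> Lp c.
Proof.
have hA := Nia; have hB := Nib.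
move/Gp_ad => [e [u [v [-> hv hc]]]]; exists u, e; split => //.
move: hv; rewrite EV // => /(E_inj n0) [_ /dvdzP[w hw]].
move: hc => /andP[/dvdzP[y hy] /dvdzP[x hx]]; move: hw hy hx; rewrite /eN.
case: e => hw hy hx; apply/dvdzP.
- by exists (y + w * ib); move: hw; rewrite hB => hw; lia.
- by exists (x - w * ia); move: hw; rewrite hA => hw; lia.
Qed.

Lemma refl_char g : (Gp g /\ reflection g) <->
  ((exists c, Lp c /\ g = Mb c) \/
   (exists h, [/\ Hset h, h <> qone & (g = diag2 h qone \/ g = diag2 qone h)])).
Proof.
split.
- move=> [hg [_ [ne r1]]]; move: (hg) r1 ne => [t [e [u [v [-> hc]]]]].
  case: t => /= r1 ne.
  + have hyx := refl_Ad_inv r1.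
    have hinv : E v e = qinv (E u e).
      have [_ h2] := qinvK (@E_neq0 R n u e).
      by rewrite -[E v e]qmulr1 -h2 qmulA hyx qmul1.
    left; exists (E u e); split; last by rewrite /Mb hinv.
    by apply: Gp_Mb_L; rewrite /Mb -hinv; exists true, e, u, v.
  + right; case: (refl_Dg ne r1) => [[h1 h2]|[h1 h2]].
    * exists (E u e); split => //; last by left; rewrite h2.
      by apply/Gp_diag1; rewrite -h2; exists false, e, u, v.
    * exists (E v e); split => //; last by right; rewrite h1.
      by apply/Gp_diag2; rewrite -h1; exists false, e, u, v.
- move=> [[c [hc ->]]|[h [hh h1 [->|->]]]].
  + have hg := Gp_Mb hc; split => //; split; first exact: Gp_unitary.
    split; first by move=> /(congr1 (@m11 R)) /=; apply: nesym; exact: qone_neq0.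
    by move: hc => [k [e [-> _]]]; apply: rank1_Ad; exact: E_neq0.
  + have hg : Gp (diag2 h qone) by apply/Gp_diag1.
    split => //; split; first exact: Gp_unitary.
    split; first by move=> /(congr1 (@m11 R)).
    exact: rank1_D1.
  + have hg : Gp (diag2 qone h) by apply/Gp_diag2.
    split => //; split; first exact: Gp_unitary.
    split; first by move=> /(congr1 (@m22 R)).
    exact: rank1_D2.
Qed.


Lemma Einj_lin (d K i j : int) e : d != 0 -> 2 * N = K * d ->
  0 <= i < K -> 0 <= j < K -> E (i * d) e = E (j * d) e -> i = j.
Proof.
move=> d0 hK /andP[i0 iK] /andP[j0 jK] /(E_inj n0) [_ /dvdzP[m hm]].
have : i - j = m * K.
  apply/eqP; rewrite -subr_eq0; apply/eqP; apply: (@mulIf _ d) => //.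
  rewrite mul0r; move: hm; rewrite hK; lia.
move/small0 => h; apply/eqP; rewrite -subr_eq0; apply/eqP; apply: h; lia.
Qed.

Lemma E_red (d K z : int) e : 0 < K -> 2 * N = K * d ->
  exists r, 0 <= r < K /\ E (z * d) e = E (r * d) e.
Proof.
move=> K0 hK; exists (z %% K)%Z; split.
  by rewrite modz_ge0 ?gt_eqF // ltz_pmod.
rewrite {1}(divz_eq z K) -(@E_per R n n0 _ (- (z %/ K)%Z)) //.
by apply: Eeq; rewrite hK; ring.
Qed.


Definition b2 : nat := (2 * (n %/ b))%N.
Definition fR (j : ('I_a2 + 'I_b2) + ('I_cc.-1 + 'I_cc.-1)) : M :=
  match j with
  | inl (inl i) => Mb (E ((i : nat)%:Z * A) false)
  | inl (inr i) => Mb (E ((i : nat)%:Z * B) true)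
  | inr (inl i) => diag2 (E (((i : nat)%:Z + 1) * (2 * A * B)) false) qone
  | inr (inr i) => diag2 qone (E (((i : nat)%:Z + 1) * (2 * A * B)) false)
  end.

Lemma NK : 2 * N = cc%:Z * (2 * A * B).
Proof. by rewrite {1}n_cc PoszM PoszM; ring. Qed.

Lemma fR_inj : injective fR.
Proof.
have hA := Nia; have hB := Nib.
have A0 : A != 0 by rewrite eqz_nat -lt0n.
have B0 : B != 0 by rewrite eqz_nat -lt0n.
have AB0 : 2 * A * B != 0 by rewrite !mulf_eq0 negb_or negb_or A0 B0.
have KA : 2 * N = (2 * ia) * A by rewrite hA; ring.
have KB : 2 * N = (2 * ib) * B by rewrite hB; ring.
have KC := NK.
have ba : forall i : 'I_a2, 0 <= (i : nat)%:Z < 2 * ia.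
  move=> i; rewrite /ia -[2]/(2%N : int) -PoszM ltz_nat; apply/andP; split => //; exact: ltn_ord.
have bb : forall i : 'I_b2, 0 <= (i : nat)%:Z < 2 * ib.
  move=> i; rewrite /ib -[2]/(2%N : int) -PoszM ltz_nat; apply/andP; split => //; exact: ltn_ord.
have bc : forall i : 'I_cc.-1, 0 <= (i : nat)%:Z + 1 < cc%:Z.
  by move=> i; have := ltn_ord i; have := cc0; lia.
have c0 : forall i : 'I_cc.-1, E (((i : nat)%:Z + 1) * (2 * A * B)) false <> qone.
  move=> i h; have := bc i; rewrite (Eq1 R n) -(mul0r (2 * A * B)) in h.
  have := Einj_lin AB0 KC (bc i) _ h; have := cc0; lia.
have Mb_inj : forall x y : H, Mb x = Mb y -> x = y.
  by move=> x y hxy; have := congr1 (@m12 R) hxy.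
have ord_inj' : forall K (i j : 'I_K), (i : nat)%:Z = (j : nat)%:Z -> i = j.
  by move=> K i j h; apply: ord_inj; lia.
case=> [[i|i]|[i|i]] [[j|j]|[j|j]] // h; cbn [fR] in h.
- by rewrite (ord_inj' _ _ _ (Einj_lin A0 KA (ba i) (ba j) (Mb_inj _ _ h))).
- by move: h => /Mb_inj /(E_inj n0) [].
- by move: h => /(congr1 (@m11 R)) /= /esym /E_neq0.
- by move: h => /(congr1 (@m11 R)) /= /esym /qone_neq0.
- by move: h => /Mb_inj /(E_inj n0) [].
- by rewrite (ord_inj' _ _ _ (Einj_lin B0 KB (bb i) (bb j) (Mb_inj _ _ h))).
- by move: h => /(congr1 (@m11 R)) /= /esym /E_neq0.
- by move: h => /(congr1 (@m11 R)) /= /esym /qone_neq0.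
- by move: h => /(congr1 (@m11 R)) /= /E_neq0.
- by move: h => /(congr1 (@m11 R)) /= /E_neq0.
- congr (inr (inl _)); apply: ord_inj'.
  have := Einj_lin AB0 KC (bc i) (bc j) (congr1 (@m11 R) h); lia.
- by move: h => /(congr1 (@m11 R)) /= /c0.
- by move: h => /(congr1 (@m11 R)) /= /qone_neq0.
- by move: h => /(congr1 (@m11 R)) /= /qone_neq0.
- by move: h => /(congr1 (@m11 R)) /= /esym /c0.
- congr (inr (inr _)); apply: ord_inj'.
  have := Einj_lin AB0 KC (bc i) (bc j) (congr1 (@m22 R) h); lia.
Qed.


Lemma card_refl : has_card [set g | Gp g /\ reflection g]
  (2 * n %/ (a * b) + 2 * n %/ a + 2 * n %/ b - 2)%N.
Proof.
have hA := Nia; have hB := Nib.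
have A0 : A != 0 by rewrite eqz_nat -lt0n.
have B0 : B != 0 by rewrite eqz_nat -lt0n.
have KA : 2 * N = (2 * ia) * A by rewrite hA; ring.
have KB : 2 * N = (2 * ib) * B by rewrite hB; ring.
have KC := NK.
have ia0 : 0 < ia by rewrite /ia ltz_nat divn_gt0 // dvdn_leq.
have ib0 : 0 < ib by rewrite /ib ltz_nat divn_gt0 // dvdn_leq.
have ccp := cc0.
have -> : (2 * n %/ (a * b) + 2 * n %/ a + 2 * n %/ b - 2)%N =
          #|{: ('I_a2 + 'I_b2) + ('I_cc.-1 + 'I_cc.-1)}|.
  rewrite !card_sum !card_ord /a2 /b2 -!muln_divA ?ab_n // -/cc.
  move: (n %/ a)%N (n %/ b)%N ccp => x y; lia.
apply: has_card_fin; first exact: fR_inj.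
have LA : forall z : int, Lp (E (z * A) false).
  by move=> z; exists (z * A), false; split => //; apply: dvdz_mull; apply: dvdzz.
have LB : forall z : int, Lp (E (z * B) true).
  by move=> z; exists (z * B), true; split => //; apply: dvdz_mull; apply: dvdzz.
have HC : forall z : int, Hset (E (z * (2 * A * B)) false).
  by move=> z; exists (z * (2 * A * B)); split => //; apply: dvdz_mull; apply: dvdzz.
have AB0 : 2 * A * B != 0 by rewrite !mulf_eq0 negb_or negb_or A0 B0.
have c0 : forall r : int, 0 < r < cc%:Z -> E (r * (2 * A * B)) false <> qone.
  move=> r hr h; rewrite (Eq1 R n) -(mul0r (2 * A * B)) in h.
  have := Einj_lin AB0 KC _ _ h; lia.
move=> g; rewrite /=; rewrite refl_char; split.
- move=> [[c [[k [e [-> hk]]] ->]]|[h [[k [-> /dvdzP[z ->]]] h1 hg]]].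
  + case: e hk => /dvdzP[z ->].
    * have ib2 : 0 < 2 * ib by lia.
      have [r [hr ->]] := E_red z true ib2 KB.
      have hr' : 0 <= r < b2%:Z by rewrite /b2 PoszM.
      have [i ->] := ord_of hr'.
      by exists (inl (inr i)).
    * have ia2 : 0 < 2 * ia by lia.
      have [r [hr ->]] := E_red z false ia2 KA.
      have hr' : 0 <= r < a2%:Z by rewrite /a2 PoszM.
      have [i ->] := ord_of hr'.
      by exists (inl (inl i)).
  + have ccz : 0 < cc%:Z by rewrite ltz_nat.
    have [r [hr her]] := E_red z false ccz KC.
    rewrite her in h1 hg.
    have r0 : r != 0 by apply/eqP => r0; apply: h1; rewrite r0 mul0r -(Eq1 R n).
    have hr' : 0 <= r - 1 < (cc.-1)%:Z by apply/andP; split; lia.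
    have [i hi] := ord_of hr'.
    have ee : E (r * (2 * A * B)) false = E (((i : nat)%:Z + 1) * (2 * A * B)) false.
      by apply: Eeq; rewrite -hi; ring.
    rewrite ee in hg.
    by case: hg => ->; [exists (inr (inl i)) | exists (inr (inr i))].
- move=> [[[i|i]|[i|i]] ->].
  + by left; exists (E ((i : nat)%:Z * A) false); split; [apply: LA |].
  + by left; exists (E ((i : nat)%:Z * B) true); split; [apply: LB |].
  + right; exists (E (((i : nat)%:Z + 1) * (2 * A * B)) false); split; [exact: HC | | by left].
    move=> hE; apply: (c0 _ _ hE); have := ltn_ord i; have := cc0; lia.
  + right; exists (E (((i : nat)%:Z + 1) * (2 * A * B)) false); split; [exact: HC | | by right].
    move=> hE; apply: (c0 _ _ hE); have := ltn_ord i; have := cc0; lia.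
Qed.


Lemma card_H : has_card Hset cc.
Proof.
have A0 : A != 0 by rewrite eqz_nat -lt0n.
have B0 : B != 0 by rewrite eqz_nat -lt0n.
have AB0 : 2 * A * B != 0 by rewrite !mulf_eq0 negb_or negb_or A0 B0.
have KC := NK.
have ccz : 0 < cc%:Z by rewrite ltz_nat cc0.
rewrite -[in has_card _ cc](card_ord cc).
apply: (@has_card_fin _ _ (fun i : 'I_cc => E ((i : nat)%:Z * (2 * A * B)) false)).
- move=> i j /(Einj_lin AB0 KC) h; apply: ord_inj.
  have : (i : nat)%:Z = (j : nat)%:Z by apply: h; apply/andP; split => //; rewrite ltz_nat.
  lia.
- move=> h; split.
  + move=> [k [-> /dvdzP[z ->]]].
    have [r [hr ->]] := E_red z false ccz KC.
    by have [i ->] := ord_of hr; exists i.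
  + move=> [i ->]; exists ((i : nat)%:Z * (2 * A * B)); split => //.
    by apply: dvdz_mull; apply: dvdzz.
Qed.

Lemma main_ab :
  let L := @Lab R n a b in
  let G := base_group L in
  (HL L = qgen [set qpow (@omega R n) (2 * (a * b))]
   /\ HL L = @Ccyc R n (n %/ (a * b))
   /\ has_card (HL L) (n %/ (a * b)))
  /\ (GK_conditions (@Dic R n) L (@Ccyc R n (n %/ (a * b)))
      /\ G = Ggrp L (@Ccyc R n (n %/ (a * b))))
  /\ has_card G (8 * n ^ 2 %/ (a * b))
  /\ has_card [set g | G g /\ reflection g]
       (2 * n %/ (a * b) + 2 * n %/ a + 2 * n %/ b - 2).
Proof.
move=> L G; rewrite /G /L base_eq HL_eq Ccyc_eq Ggrp_eq.
split; first by split; [exact: Hset_qgen | split => //; exact: card_H].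
split; first by split => //; exact: GK.
by split; [exact: card_Gp | exact: card_refl].
Qed.

Lemma canon c : base_group (@Lab R n a b) (Mb c) <-> Lp c.
Proof. by rewrite base_eq; split; [exact: Gp_Mb_L | exact: Gp_Mb]. Qed.

Lemma Lp_a : Lp (E a false).
Proof. by exists a, false; split => //; apply: dvdzz. Qed.
Lemma Lp_b : Lp (E b true).
Proof. by exists b, true; split => //; apply: dvdzz. Qed.

Lemma Lp_dvdA k : Lp (E k false) -> (A %| k)%Z.
Proof.
move=> [k' [e [/(E_inj n0) [<- /dvdzP[w hw]] /dvdzP[z hz]]]].
have hA := Nia; apply/dvdzP; exists (z + w * 2 * ia).
by move: hw; rewrite hA => hw; lia.
Qed.
Lemma Lp_dvdB k : Lp (E k true) -> (B %| k)%Z.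
Proof.
move=> [k' [e [/(E_inj n0) [<- /dvdzP[w hw]] /dvdzP[z hz]]]].
have hB := Nib; apply/dvdzP; exists (z + w * 2 * ib).
by move: hw; rewrite hB => hw; lia.
Qed.

End G.


Local Close Scope ring_scope.
Local Close Scope classical_set_scope.
Local Open Scope classical_set_scope.
Unset Implicit Arguments.

Theorem theorem5p3 (R : realType) (n a b : nat) :
  (2 <= n)%N -> Omega n a b ->
  let L := @Lab R n a b in
  let G := base_group L in
  (HL L = qgen [set qpow (@omega R n) (2 * (a * b))]
   /\ HL L = @Ccyc R n (n %/ (a * b))
   /\ has_card (HL L) (n %/ (a * b)))
  /\ (GK_conditions (@Dic R n) L (@Ccyc R n (n %/ (a * b)))
      /\ G = Ggrp L (@Ccyc R n (n %/ (a * b))))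
  /\ has_card G (8 * n ^ 2 %/ (a * b))
  /\ has_card [set g | G g /\ reflection g]
       (2 * n %/ (a * b) + 2 * n %/ a + 2 * n %/ b - 2)
  /\ (forall a' b' : nat, Omega n a' b' -> (a, b) <> (a', b') ->
        G <> base_group (@Lab R n a' b')).
Proof.
move=> n2 /andP[a1 /andP[ab /andP[bn' /andP[an /andP[bn cab]]]]].
have n0 : (0 < n)%N by apply: leq_trans n2.
have b0 : (0 < b)%N by apply: leq_trans ab.
have [H1 [H2 [H3 H4]]] := main_ab R n0 a1 b0 an bn cab.
move=> L G; split => //; split => //; split => //; split => //.
move=> a' b' /andP[a1' /andP[ab' /andP[bn'' /andP[an' /andP[bn2 cab']]]]] neq hG.
have b0' : (0 < b')%N by apply: leq_trans ab'.
have eqL : forall c, @Lp R n a b c <-> @Lp R n a' b' c.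
  move=> c; rewrite -(canon (R:=R) n0 a1 b0 an bn cab) -(canon (R:=R) n0 a1' b0' an' bn2 cab').
  by rewrite /G /L in hG; rewrite hG.
apply: neq; congr pair; apply/eqP; rewrite eqn_dvd; apply/andP; split.
- have := Lp_dvdA (R:=R) n0 a1 b0 an bn cab (proj2 (eqL _) (Lp_a R n a' b')).
  by [].
- have := Lp_dvdA (R:=R) n0 a1' b0' an' bn2 cab' (proj1 (eqL _) (Lp_a R n a b)).
  by [].
- have := Lp_dvdB (R:=R) n0 a1 b0 an bn cab (proj2 (eqL _) (Lp_b R n a' b')).
  by [].
- have := Lp_dvdB (R:=R) n0 a1' b0' an' bn2 cab' (proj1 (eqL _) (Lp_b R n a b)).
  by [].
Qed.
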